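(* With $\varepsilon,N,q,P_{(0)},d$ as in the context, assume $0<1-4d^2<1$ and let $\eta>0$ satisfy $\tanh\eta=\sqrt{1-4d^2}$. For real $\theta$ set $$w(\theta)=\frac{\sinh(\eta-\theta)}{\sinh(\eta+\theta)}-1,\qquad \hat R(\theta)=I+w(\theta)P_{(0)}.$$ Then for all real $\theta,\theta'$ with $\eta+\theta,\eta+\theta',\eta+\theta+\theta'\neq0$, $$\hat R_{12}(\theta)\hat R_{23}(\theta+\theta')\hat R_{12}(\theta')=\hat R_{23}(\theta')\hat R_{12}(\theta+\theta')\hat R_{23}(\theta),$$ and $\hat R(\theta)\hat R(-\theta)=I$ whenever both sides are defined. Equivalently, $w$ satisfies $w(\theta+\theta')=\frac{w(\theta)+w(\theta')+w(\theta)w(\theta')}{1-d^2w(\theta)w(\theta')}$.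
   Context: Let $\varepsilon\in\{1,-1\}$, $N\ge 2$ (with $N=2n$ even if $\varepsilon=-1$), $q>0$, $[x]=(q^x-q^{-x})/(q-q^{-1})$ ($[x]=x$ if $q=1$). Define $\rho=(n-\tfrac12,\dots,\tfrac12,0,-\tfrac12,\dots,-n+\tfrac12)$ if $\varepsilon=1,N=2n+1$; $\rho=(n-1,\dots,1,0,0,-1,\dots,-n+1)$ if $\varepsilon=1,N=2n$; $\rho=(n,\dots,1,-1,\dots,-n)$ if $\varepsilon=-1,N=2n$. Let $\epsilon_i=1$ for all $i$ if $\varepsilon=1$; $\epsilon_i=1$ for $i\le n$ and $-1$ for $i>n$ if $\varepsilon=-1$. With $i'=N+1-i$ and matrix units $E_{ij}$, $P_{(0)}=(1+\varepsilon[N-\varepsilon])^{-1}\sum_{i,j}q^{\rho_i-\rho_j}\epsilon_i\epsilon_jE_{i',j}\otimes E_{i,j'}$ on $\mathbb C^N\otimes\mathbb C^N$; $1+\varepsilon[N-\varepsilon]\neq0$ is assumed and $d=(1+\varepsilon[N-\varepsilon])^{-1}$. $A_{12}=A\otimes I$, $A_{23}=I\otimes A$. *)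

(* Defs.v *)
From HB Require Import structures.
From mathcomp Require Import all_boot all_order all_algebra.
From mathcomp Require Import all_classical all_reals all_analysis.
From mathcomp Require Import mxtens.
Set Implicit Arguments. Unset Strict Implicit. Unset Printing Implicit Defensive.
Import Order.TTheory GRing.Theory Num.Theory.
Local Open Scope ring_scope.

Definition sinh {R : realType} (x : R) : R := (expR x - expR (- x)) / 2.
Definition cosh {R : realType} (x : R) : R := (expR x + expR (- x)) / 2.
Definition tanh {R : realType} (x : R) : R := sinh x / cosh x.

Definition qnum {R : realType} (q x : R) : R :=
  if q == 1 then x else (powR q x - powR q (- x)) / (q - q^-1).

(* The sign eps is encoded as a boolean: symp = false <-> eps = 1,
   symp = true <-> eps = -1 (symplectic case, N = 2n even). *)
Definition epsR {R : realType} (symp : bool) : R := if symp then -1 else 1.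

(* rho_k for the 1-based index k (1 <= k <= N), n = N %/ 2. *)
Definition rho {R : realType} (symp : bool) (N k : nat) : R :=
  let n := (N %/ 2)%N in
  if symp then
    (* eps = -1, N = 2n : (n, ..., 1, -1, ..., -n) *)
    (if (k <= n)%N then n%:R + 1 - k%:R else n%:R - k%:R)
  else if odd N then
    (* eps = 1, N = 2n+1 : (n-1/2, ..., 1/2, 0, -1/2, ..., -n+1/2) *)
    (if (k <= n)%N then n%:R + 2^-1 - k%:R
     else if k == n.+1 then 0 else n%:R + 3 / 2 - k%:R)
  else
    (* eps = 1, N = 2n : (n-1, ..., 1, 0, 0, -1, ..., -n+1) *)
    (if (k <= n)%N then n%:R - k%:R else n%:R + 1 - k%:R).

Definition epsi {R : realType} (symp : bool) (N k : nat) : R :=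
  if symp then (if (k <= N %/ 2)%N then 1 else -1) else 1.

Definition dconst {R : realType} (symp : bool) (N : nat) (q : R) : R :=
  (1 + epsR symp * qnum q (N%:R - epsR symp))^-1.

(* P_(0) on C^N (x) C^N, as an (N*N) x (N*N) matrix (Kronecker convention
   of mxtens: index (i,j) |-> i*N + j).  Ordinal i : 'I_N stands for the
   1-based index i+1, so i' = N+1-i corresponds to rev_ord i. *)
Definition P0 {R : realType} (symp : bool) (N : nat) (q : R) : 'M[R]_(N * N) :=
  dconst symp N q *:
  \sum_(i < N) \sum_(j < N)
     (powR q (rho symp N i.+1 - rho symp N j.+1)
        * epsi symp N i.+1 * epsi symp N j.+1) *:
     ((delta_mx (rev_ord i) j : 'M[R]_N) *t (delta_mx i (rev_ord j) : 'M[R]_N)).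

Definition wfun {R : realType} (eta theta : R) : R :=
  sinh (eta - theta) / sinh (eta + theta) - 1.

Definition Rhat {R : realType} (symp : bool) (N : nat) (q eta theta : R)
  : 'M[R]_(N * N) := 1%:M + wfun eta theta *: P0 symp N q.

Definition op12 {R : realType} (N : nat) (A : 'M[R]_(N * N)) : 'M[R]_(N * N * N) :=
  A *t (1%:M : 'M[R]_N).
Definition op23 {R : realType} (N : nat) (A : 'M[R]_(N * N)) : 'M[R]_(N * N * N) :=
  castmx (mulnA N N N, mulnA N N N) ((1%:M : 'M[R]_N) *t A).

(* Main.v *)
Require Import Defs.
From HB Require Import structures.
From mathcomp Require Import all_boot all_order all_algebra.
From mathcomp Require Import all_classical all_reals all_analysis.
From mathcomp Require Import mxtens.
From mathcomp Require Import ring lra.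
Import Order.TTheory GRing.Theory Num.Theory.
Local Open Scope ring_scope.
From mathcomp Require Import zify.

Section Scal.
Variable R : realType.

Lemma sinhE (x : R) : sinh x = (expR x ^+ 2 - 1) / (2 * expR x).
Proof.
rewrite /sinh expRN. have h := expR_gt0 x. field. by rewrite gt_eqF.
Qed.

Lemma sinh_neq0 {x : R} : x != 0 -> sinh x != 0.
Proof.
move=> hx; rewrite /sinh mulf_neq0 // ?invr_eq0 // subr_eq0.
apply/negP=> /eqP /expR_inj h; move: hx; have: x = 0 by lra. by move->; rewrite eqxx.
Qed.

Lemma wfunE {eta t : R} : eta + t != 0 ->
  wfun eta t = (expR eta ^+ 2 + 1) * (1 - expR t ^+ 2) / (expR eta ^+ 2 * expR t ^+ 2 - 1).
Proof.
move=> h; have := sinh_neq0 h; rewrite /wfun !sinhE !expRD expRN => hs.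
have h1 := expR_gt0 eta; have h2 := expR_gt0 t.
have hd : expR eta ^+ 2 * expR t ^+ 2 - 1 != 0.
  by move: hs; rewrite exprMn mulf_eq0 negb_or => /andP[].
field. by rewrite exprMn hd !gt_eqF.
Qed.
Definition W (e t : R) := (e + 1) * (1 - t) / (e * t - 1).

Lemma W_den {e t u : R} : e * t - 1 != 0 -> e * u - 1 != 0 -> e + 1 != 0 ->
  1 - e / (e + 1) ^+ 2 * W e t * W e u = (e - 1) * (e * (t * u) - 1) / ((e * t - 1) * (e * u - 1)).
Proof. move=> h1 h2 h3; rewrite /W; field; by rewrite h1 h2 h3. Qed.

Lemma W_add {e t u : R} : e * t - 1 != 0 -> e * u - 1 != 0 -> e + 1 != 0 ->
  e * (t * u) - 1 != 0 ->
  W e (t * u) * (1 - e / (e + 1) ^+ 2 * W e t * W e u) = W e t + W e u + W e t * W e u.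
Proof. move=> h1 h2 h3 h4; rewrite /W; field; by rewrite h1 h2 h3 h4. Qed.

Lemma expR2_neq1 (x : R) : x != 0 -> expR x ^+ 2 - 1 != 0.
Proof.
move=> hx; apply/negP => /eqP h.
have hp := expR_gt0 x.
have h1 : expR x = 1.
  have : (expR x - 1) * (expR x + 1) = 0 by rewrite -h; ring.
  move/eqP; rewrite mulf_eq0 => /orP[/eqP|/eqP]; lra.
by move: hx; rewrite -expR0 in h1; move/expR_inj: h1 => ->; rewrite eqxx.
Qed.

Lemma tanhE (x : R) : tanh x = (expR x ^+ 2 - 1) / (expR x ^+ 2 + 1).
Proof.
rewrite /tanh sinhE /cosh expRN. have h := expR_gt0 x.
field. have : 0 < expR x ^+ 2 + 1 by rewrite ltr_wpDl ?sqr_ge0.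
by move=> h'; rewrite !gt_eqF.
Qed.

Lemma d2E (eta d : R) : 0 < 1 - 4 * d ^+ 2 -> tanh eta = Num.sqrt (1 - 4 * d ^+ 2) ->
  d ^+ 2 = expR eta ^+ 2 / (expR eta ^+ 2 + 1) ^+ 2.
Proof.
move=> h0 ht.
have : tanh eta ^+ 2 = 1 - 4 * d ^+ 2 by rewrite ht sqr_sqrtr // ltW.
rewrite tanhE => e.
have hp : 0 < expR eta ^+ 2 + 1 by rewrite ltr_wpDl ?sqr_ge0.
have -> : d ^+ 2 = (1 - (1 - 4 * d ^+ 2)) / 4 by field.
rewrite -e. field. by rewrite gt_eqF.
Qed.
Lemma w_main (eta d th th' : R) : 0 < eta -> 0 < 1 - 4 * d ^+ 2 ->
  tanh eta = Num.sqrt (1 - 4 * d ^+ 2) ->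
  eta + th != 0 -> eta + th' != 0 -> eta + th + th' != 0 ->
  (1 - d ^+ 2 * wfun eta th * wfun eta th' != 0) /\
  wfun eta (th + th') * (1 - d ^+ 2 * wfun eta th * wfun eta th')
   = wfun eta th + wfun eta th' + wfun eta th * wfun eta th'.
Proof.
move=> he h0 ht h1 h2 h3.
rewrite (@d2E eta d h0 ht) !wfunE // ?addrA // expRD exprMn.
set e := expR eta ^+ 2; set t := expR th ^+ 2; set u := expR th' ^+ 2.
have n1 : e * t - 1 != 0 by rewrite /e /t -exprMn -expRD expR2_neq1.
have n2 : e * u - 1 != 0 by rewrite /e /u -exprMn -expRD expR2_neq1.
have n4 : e * (t * u) - 1 != 0.
  by rewrite /e /t /u -!exprMn -!expRD addrA expR2_neq1.
have n3 : e + 1 != 0 by rewrite gt_eqF // ltr_wpDl ?sqr_ge0.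
have n5 : e - 1 != 0.
  have : 1 < expR eta by rewrite expR_gt1.
  by move=> h; rewrite /e gt_eqF //; nra.
have := W_add n1 n2 n3 n4; have := W_den n1 n2 n3; rewrite /W => D A.
split; last by rewrite A.
rewrite D; rewrite !mulf_neq0 // invr_neq0 // mulf_neq0 //.
Qed.
Lemma w_unit (eta th : R) : eta + th != 0 -> eta - th != 0 ->
  wfun eta th + wfun eta (- th) + wfun eta th * wfun eta (- th) = 0.
Proof.
move=> h1 h2; have s1 := sinh_neq0 h1; have s2 := sinh_neq0 h2.
rewrite /wfun opprK. field. by rewrite s1 s2.
Qed.
End Scal.
Section Abs.
Variable R : comRingType.
Variable k : nat.
Implicit Types A B : 'M[R]_k.

Lemma ybe_abs A B (a b c d2 : R) :
  A *m A = A -> B *m B = B -> A *m B *m A = d2 *: A -> B *m A *m B = d2 *: B ->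
  b = a + c + a * c + a * b * c * d2 ->
  (1%:M + a *: A) *m (1%:M + b *: B) *m (1%:M + c *: A)
  = (1%:M + c *: B) *m (1%:M + b *: A) *m (1%:M + a *: B).
Proof.
move=> hA hB hABA hBAB hb.
rewrite !(mulmxDl, mulmxDr, mul1mx, mulmx1).
rewrite -!(scalemxAl, scalemxAr) !scalerA ?mulmxA hA hB hABA hBAB !scalerA.
apply/matrixP => i j; rewrite !mxE; apply/eqP; rewrite -subr_eq0; apply/eqP.
transitivity ((b - (a + c + a * c + a * b * c * d2)) * (B i j - A i j)); first ring.
by rewrite -hb subrr mul0r.
Qed.

Lemma unit_abs A (a c : R) : A *m A = A -> a + c + a * c = 0 ->
  (1%:M + a *: A) *m (1%:M + c *: A) = 1%:M.
Proof.
move=> hA h; rewrite !(mulmxDl, mulmxDr, mul1mx, mulmx1) -!(scalemxAl, scalemxAr) hA scalerA.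
apply/matrixP => i j; rewrite !mxE; apply/eqP; rewrite -subr_eq0; apply/eqP.
transitivity ((a + c + a * c) * A i j); first ring.
by rewrite h mul0r.
Qed.
End Abs.
Section Tens.
Variable R : comRingType.

Lemma tensmx_suml m n p q (I : finType) (F : I -> 'M[R]_(m, n)) (B : 'M[R]_(p, q)) :
  (\sum_i F i) *t B = \sum_i (F i *t B).
Proof.
apply/matrixP => i j; rewrite !mxE summxE mulr_suml summxE.
by apply: eq_bigr => k _; rewrite !mxE.
Qed.

Lemma tensmx_sumr m n p q (I : finType) (A : 'M[R]_(m, n)) (F : I -> 'M[R]_(p, q)) :
  A *t (\sum_i F i) = \sum_i (A *t F i).
Proof.
apply/matrixP => i j; rewrite !mxE summxE mulr_sumr summxE.
by apply: eq_bigr => k _; rewrite !mxE.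
Qed.

Lemma tensmxZl m n p q (a : R) (A : 'M[R]_(m, n)) (B : 'M[R]_(p, q)) :
  (a *: A) *t B = a *: (A *t B).
Proof. by apply/matrixP => i j; rewrite !mxE mulrA. Qed.

Lemma tensmxZr m n p q (a : R) (A : 'M[R]_(m, n)) (B : 'M[R]_(p, q)) :
  A *t (a *: B) = a *: (A *t B).
Proof. by apply/matrixP => i j; rewrite !mxE mulrCA. Qed.

Lemma tensmxMnl m n p q (k : nat) (A : 'M[R]_(m, n)) (B : 'M[R]_(p, q)) :
  (A *+ k) *t B = (A *t B) *+ k.
Proof. by apply/matrixP => i j; rewrite !(mxE, mulmxnE) mulrnAl. Qed.

Lemma tensmxMnr m n p q (k : nat) (A : 'M[R]_(m, n)) (B : 'M[R]_(p, q)) :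
  A *t (B *+ k) = (A *t B) *+ k.
Proof. by apply/matrixP => i j; rewrite !(mxE, mulmxnE) mulrnAr. Qed.

Lemma tensmxDl m n p q (A A' : 'M[R]_(m, n)) (B : 'M[R]_(p, q)) :
  (A + A') *t B = A *t B + A' *t B.
Proof. by apply/matrixP => i j; rewrite !mxE mulrDl. Qed.

Lemma tens11 m n : (1%:M : 'M[R]_m) *t (1%:M : 'M[R]_n) = 1%:M.
Proof.
apply/matrixP => i j.
case: (mxtens_indexP i) => i1 i2; case: (mxtens_indexP j) => j1 j2.
rewrite tensmxE !mxE (can_eq (@mxtens_indexK _ _)) xpair_eqE.
by case: (i1 == j1); case: (i2 == j2); rewrite /= ?mulr1 ?mulr0 ?mul0r.
Qed.

Lemma tensA m n p m' n' p' (A : 'M[R]_(m, m')) (B : 'M[R]_(n, n')) (C : 'M[R]_(p, p')) :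
  castmx (mulnA m n p, mulnA m' n' p') (A *t (B *t C)) = (A *t B) *t C.
Proof.
apply/matrixP => i j.
case: (mxtens_indexP i) => i1 i2; case: (mxtens_indexP i1) => i3 i4.
case: (mxtens_indexP j) => j1 j2; case: (mxtens_indexP j1) => j3 j4.
rewrite castmxE !tensmxE.
have -> : cast_ord (esym (mulnA m n p)) (mxtens_index (mxtens_index (i3, i4), i2))
   = mxtens_index (i3, mxtens_index (i4, i2)).
  by apply: val_inj => /=; rewrite mulnDl -mulnA addnA.
have -> : cast_ord (esym (mulnA m' n' p')) (mxtens_index (mxtens_index (j3, j4), j2))
   = mxtens_index (j3, mxtens_index (j4, j2)).
  by apply: val_inj => /=; rewrite mulnDl -mulnA addnA.
by rewrite !tensmxE mulrA.
Qed.

Lemma castmx_mulmx m m' (e : m = m') (M N : 'M[R]_m) :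
  castmx (e, e) (M *m N) = castmx (e, e) M *m castmx (e, e) N.
Proof. by case: m' / e. Qed.

Lemma castmx1 m m' (e : m = m') : castmx (e, e) (1%:M : 'M[R]_m) = 1%:M.
Proof. by case: m' / e. Qed.

Lemma castmxD' m m' n n' (e : m = m') (f : n = n') (M N : 'M[R]_(m, n)) :
  castmx (e, f) (M + N) = castmx (e, f) M + castmx (e, f) N.
Proof. by case: m' / e; case: n' / f. Qed.

Lemma castmxZ' m m' n n' (e : m = m') (f : n = n') a (M : 'M[R]_(m, n)) :
  castmx (e, f) (a *: M) = a *: castmx (e, f) M.
Proof. by case: m' / e; case: n' / f. Qed.

Lemma castmx_sum m m' n n' (e : m = m') (f : n = n') (I : finType) (F : I -> 'M[R]_(m, n)) :
  castmx (e, f) (\sum_i F i) = \sum_i castmx (e, f) (F i).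
Proof. by case: m' / e; case: n' / f. Qed.
End Tens.
Section Ops.
Variable R : realType.
Variable N : nat.
Implicit Types A B : 'M[R]_(N * N).

Lemma op12_1 : op12 (1%:M : 'M[R]_(N * N)) = 1%:M.
Proof. by rewrite /op12 tens11. Qed.
Lemma op12M A B : op12 (A *m B) = op12 A *m op12 B.
Proof. by rewrite /op12 tensmx_mul mulmx1. Qed.
Lemma op12D A B : op12 (A + B) = op12 A + op12 B.
Proof. by rewrite /op12 tensmxDl. Qed.
Lemma op12Z a A : op12 (a *: A) = a *: op12 A.
Proof. by rewrite /op12 tensmxZl. Qed.
Lemma op12_sum (I : finType) (F : I -> 'M[R]_(N * N)) : op12 (\sum_i F i) = \sum_i op12 (F i).
Proof. by rewrite /op12 tensmx_suml. Qed.

Lemma op23_1 : op23 (1%:M : 'M[R]_(N * N)) = 1%:M.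
Proof. by rewrite /op23 tens11 castmx1. Qed.
Lemma op23M A B : op23 (A *m B) = op23 A *m op23 B.
Proof. by rewrite /op23 -castmx_mulmx tensmx_mul mulmx1. Qed.
Lemma op23D A B : op23 (A + B) = op23 A + op23 B.
Proof.
rewrite /op23 -castmxD'; congr castmx.
by apply/matrixP => i j; rewrite !mxE mulrDr.
Qed.
Lemma op23Z a A : op23 (a *: A) = a *: op23 A.
Proof. by rewrite /op23 tensmxZr castmxZ'. Qed.
Lemma op23_sum (I : finType) (F : I -> 'M[R]_(N * N)) : op23 (\sum_i F i) = \sum_i op23 (F i).
Proof. by rewrite /op23 tensmx_sumr castmx_sum. Qed.
Lemma op23T (A B : 'M[R]_N) : op23 (A *t B) = ((1%:M : 'M[R]_N) *t A) *t B.
Proof. by rewrite /op23 tensA. Qed.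
End Ops.
Lemma sum_only (V : zmodType) n (F : 'I_n -> V) i0 :
  (forall j, j != i0 -> F j = 0) -> \sum_j F j = F i0.
Proof. by move=> h; rewrite (bigD1 i0) //= big1 ?addr0 // => j /h. Qed.

Lemma rev_eqE n (i j : 'I_n) : (rev_ord j == i) = (j == rev_ord i).
Proof. by apply/eqP/eqP => [<-|->]; rewrite rev_ordK. Qed.

Section KL.
Variable R : realType.
Variable N : nat.
Variable k0 : 'I_N.
Variables al be : 'I_N -> R.
Local Notation dl := (fun i j => (delta_mx i j : 'M[R]_N)).
Definition e := dl k0 k0.
Definition K := \sum_(i < N) al i *: (dl (rev_ord i) k0 *t dl i k0).
Definition L := \sum_(j < N) be j *: (dl k0 j *t dl k0 (rev_ord j)).
Definition E := \sum_(i < N) \sum_(j < N) (al i * be j) *: (dl (rev_ord i) j *t dl i (rev_ord j)).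

Lemma KL_E : K *m L = E.
Proof.
rewrite /K /L mulmx_suml; apply: eq_bigr => i _; rewrite mulmx_sumr; apply: eq_bigr => j _.
by rewrite -scalemxAl -scalemxAr scalerA tensmx_mul !mul_delta_mx.
Qed.

Lemma LK : L *m K = (\sum_i al i * be (rev_ord i)) *: (e *t e).
Proof.
rewrite /K /L mulmx_suml; under eq_bigr => j _ do rewrite mulmx_sumr.
rewrite exchange_big scaler_suml /=; apply: eq_bigr => i _.
rewrite (@sum_only _ _ _ (rev_ord i)).
  by rewrite -scalemxAl -scalemxAr scalerA tensmx_mul rev_ordK !mul_delta_mx mulrC.
move=> j hj; rewrite -scalemxAl -scalemxAr tensmx_mul !mul_delta_mx_cond.
by rewrite (negbTE hj) mulr0n tens0mx !scaler0.
Qed.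

Lemma Ke : K *m (e *t e) = K.
Proof.
rewrite /K mulmx_suml; apply: eq_bigr => i _.
by rewrite -scalemxAl tensmx_mul !mul_delta_mx.
Qed.

Lemma eL : (e *t e) *m L = L.
Proof.
rewrite /L mulmx_sumr; apply: eq_bigr => i _.
by rewrite -scalemxAr tensmx_mul !mul_delta_mx.
Qed.

Hypothesis hab : forall i, al i * be i = 1.
Local Notation I1 := (1%:M : 'M[R]_N).

Lemma op12K : op12 K = \sum_i al i *: ((dl (rev_ord i) k0 *t dl i k0) *t I1).
Proof. by rewrite /K op12_sum; apply: eq_bigr => i _; rewrite op12Z. Qed.
Lemma op12L : op12 L = \sum_j be j *: ((dl k0 j *t dl k0 (rev_ord j)) *t I1).
Proof. by rewrite /L op12_sum; apply: eq_bigr => i _; rewrite op12Z. Qed.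
Lemma op23K : op23 K = \sum_i al i *: ((I1 *t dl (rev_ord i) k0) *t dl i k0).
Proof. by rewrite /K op23_sum; apply: eq_bigr => i _; rewrite op23Z op23T. Qed.
Lemma op23L : op23 L = \sum_j be j *: ((I1 *t dl k0 j) *t dl k0 (rev_ord j)).
Proof. by rewrite /L op23_sum; apply: eq_bigr => i _; rewrite op23Z op23T. Qed.

Lemma M1E : op12 L *m op23 K = \sum_i ((dl k0 i *t e) *t dl i k0).
Proof.
rewrite op12L op23K mulmx_suml; under eq_bigr => j _ do rewrite mulmx_sumr.
rewrite exchange_big /=; apply: eq_bigr => i _.
rewrite (@sum_only _ _ _ i).
  by rewrite -scalemxAl -scalemxAr scalerA !tensmx_mul mulmx1 !mul1mx mul_delta_mx mulrC hab scale1r.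
move=> j hj; rewrite -scalemxAl -scalemxAr !tensmx_mul mul_delta_mx_cond.
by rewrite (inj_eq rev_ord_inj) (negbTE hj) mulr0n tensmx0 tens0mx !scaler0.
Qed.

Lemma M2E : op23 L *m op12 K = \sum_i ((dl (rev_ord i) k0 *t e) *t dl k0 (rev_ord i)).
Proof.
rewrite op23L op12K mulmx_suml; under eq_bigr => j _ do rewrite mulmx_sumr.
rewrite exchange_big /=; apply: eq_bigr => i _.
rewrite (@sum_only _ _ _ i).
  by rewrite -scalemxAl -scalemxAr scalerA !tensmx_mul mulmx1 !mul1mx mul_delta_mx mulrC hab scale1r.
move=> j hj; rewrite -scalemxAl -scalemxAr !tensmx_mul mul_delta_mx_cond.
by rewrite (negbTE hj) mulr0n tensmx0 tens0mx !scaler0.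
Qed.

Lemma sum_delta : \sum_(i < N) dl i i = I1.
Proof.
apply/matrixP => a b; rewrite summxE (@sum_only _ _ _ a).
  by rewrite !mxE eqxx [b == a]eq_sym.
by move=> j hj; rewrite mxE [a == j]eq_sym (negbTE hj).
Qed.

Lemma M1M2 : (\sum_i ((dl k0 i *t e) *t dl i k0)) *m
   (\sum_i ((dl (rev_ord i) k0 *t e) *t dl k0 (rev_ord i))) = (e *t e) *t I1.
Proof.
rewrite mulmx_suml; under eq_bigr => j _ do rewrite mulmx_sumr.
rewrite -sum_delta tensmx_sumr; apply: eq_bigr => i _.
rewrite (@sum_only _ _ _ (rev_ord i)).
  by rewrite !tensmx_mul rev_ordK !mul_delta_mx.
move=> j hj; rewrite !tensmx_mul mul_delta_mx_cond eq_sym rev_eqE.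
by rewrite (negbTE hj) mulr0n !tens0mx.
Qed.

Lemma M2M1 : (\sum_i ((dl (rev_ord i) k0 *t e) *t dl k0 (rev_ord i))) *m
   (\sum_i ((dl k0 i *t e) *t dl i k0)) = (I1 *t e) *t e.
Proof.
rewrite mulmx_suml; under eq_bigr => j _ do rewrite mulmx_sumr.
rewrite exchange_big /= -sum_delta tensmx_suml tensmx_suml; apply: eq_bigr => i _.
rewrite (@sum_only _ _ _ (rev_ord i)).
  by rewrite !tensmx_mul rev_ordK !mul_delta_mx.
move=> j hj; rewrite !tensmx_mul [X in _ *t X]mul_delta_mx_cond rev_eqE.
by rewrite (negbTE hj) mulr0n !tensmx0.
Qed.

Lemma TL12 : op12 E *m op23 E *m op12 E = op12 E.
Proof.
rewrite -KL_E !op12M op23M.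
transitivity (op12 K *m ((op12 L *m op23 K) *m (op23 L *m op12 K)) *m op12 L).
  by rewrite !mulmxA.
rewrite M1E M2E M1M2 -[(e *t e) *t I1]/(op12 (e *t e)) -!op12M Ke.
by rewrite op12M.
Qed.

Lemma TL23 : op23 E *m op12 E *m op23 E = op23 E.
Proof.
rewrite -KL_E !op23M op12M.
transitivity (op23 K *m ((op23 L *m op12 K) *m (op12 L *m op23 K)) *m op23 L).
  by rewrite !mulmxA.
rewrite M1E M2E M2M1 -op23T -!op23M Ke.
by rewrite op23M.
Qed.

Lemma EE : E *m E = (\sum_i al i * be (rev_ord i)) *: E.
Proof.
rewrite -KL_E; transitivity (K *m (L *m K) *m L); first by rewrite !mulmxA.
by rewrite LK -scalemxAr -scalemxAl Ke.
Qed.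
End KL.
Arguments E {R N} al be.
Arguments TL12 {R N} k0 {al be} hab.
Arguments TL23 {R N} k0 {al be} hab.
Arguments EE {R N} k0 {al be}.

Section Rho.
Variable R : realType.

Lemma half_nnb n (b : bool) : ((n + n + b) %/ 2 = n)%N.
Proof. case: b => /=; lia. Qed.
Lemma odd_nnb n (b : bool) : odd (n + n + b) = b.
Proof. by rewrite oddD addnn odd_double; case: b. Qed.

Lemma rho_rev (symp : bool) n (b : bool) k m : (symp -> b = false) ->
  (k + m = n + n + b)%N -> (0 < m)%N ->
  rho symp (n + n + b) k.+1 = - rho symp (n + n + b) m :> R.
Proof.
move=> hs hkm hm.
have hR : k%:R + m%:R = n%:R + n%:R + b%:R :> R by rewrite -!natrD hkm.
rewrite /rho half_nnb odd_nnb -natr1.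
case: symp hs => [/(_ isT) hb|_]; first subst b.
- rewrite /= mulr0n addr0 in hR; case: ifP => h1; case: ifP => h2; try lia; lra.
- case: b hkm hR => hkm /= hR; rewrite ?mulr0n ?mulr1n ?addr0 in hR.
  + case: ifP => h1; [|case: ifP => h1'];
    (case: ifP => h2; [|case: ifP => h2']); try lia; try lra.
  + case: ifP => h1; case: ifP => h2; try lia; lra.
Qed.

Lemma epsi_rev (symp : bool) n (b : bool) k m : (symp -> b = false) ->
  (k + m = n + n + b)%N -> (0 < m)%N ->
  epsi symp (n + n + b) k.+1 * epsi symp (n + n + b) m = epsR symp :> R.
Proof.
move=> hs hkm hm; rewrite /epsi /epsR half_nnb.
case: symp hs => [/(_ isT) hb|_]; last by rewrite mulr1.
subst b; case: ifP => h1; case: ifP => h2; try lia; by rewrite ?mul1r ?mulr1.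
Qed.

Lemma split_even (F : nat -> R) n :
  \sum_(0 <= i < n + n) F i = \sum_(0 <= i < n) F (n - i.+1)%N + \sum_(0 <= i < n) F (n + i)%N.
Proof.
rewrite (@big_cat_nat _ _ _ n) //=; last by lia.
congr (_ + _); first by rewrite big_nat_rev /= add0n.
have -> : \sum_(n <= i < n + n) F i = \sum_(0 + n <= i < n + n) F i by [].
rewrite big_addn addnK; apply: eq_bigr => i _; by rewrite addnC.
Qed.

Lemma split_odd (F : nat -> R) n :
  \sum_(0 <= i < n + n + 1) F i = \sum_(0 <= i < n) F (n - i.+1)%N + F n + \sum_(0 <= i < n) F (n + 1 + i)%N.
Proof.
rewrite (@big_cat_nat _ _ _ n) //=; last by lia.
rewrite (@big_cat_nat _ _ _ n.+1 n) //=; last by lia.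
rewrite big_nat1 addrA.
congr (_ + _ + _); first by rewrite big_nat_rev /= add0n.
have -> : \sum_(n.+1 <= i < n + n + 1) F i = \sum_(0 + n.+1 <= i < n + n + 1) F i by [].
rewrite big_addn; have -> : (n + n + 1 - n.+1 = n)%N by lia.
apply: eq_bigr => i _; congr F; lia.
Qed.

Lemma natr_sub1 n i : (i < n)%N -> ((n - i.+1).+1)%:R = n%:R - i%:R :> R.
Proof. by move=> h; rewrite subnSK // natrB // ltnW. Qed.

Lemma sum_symp n (q : R) :
  \sum_(0 <= k < n + n) powR q (2 * rho true (n + n) k.+1)
  = \sum_(0 <= i < n) (powR q (2 * i%:R + 2) + powR q (- (2 * i%:R + 2))).
Proof.
rewrite split_even big_split /=.
have h2 : ((n + n) %/ 2 = n)%N by lia.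
congr (_ + _); apply: eq_big_nat => i /andP[_ hi]; congr (powR q _);
  rewrite /rho h2.
- rewrite ifT; last by lia.
  rewrite natr_sub1 //. lra.
- rewrite ifF; last by lia.
  rewrite -addnS natrD -natr1; lra.
Qed.

Lemma sum_even n (q : R) :
  \sum_(0 <= k < n + n) powR q (2 * rho false (n + n) k.+1)
  = \sum_(0 <= i < n) (powR q (2 * i%:R + 0) + powR q (- (2 * i%:R + 0))).
Proof.
rewrite split_even big_split /=.
have h2 : ((n + n) %/ 2 = n)%N by lia.
have ho : odd (n + n) = false by rewrite addnn odd_double.
congr (_ + _); apply: eq_big_nat => i /andP[_ hi]; congr (powR q _);
  rewrite /rho h2 ho.
- rewrite ifT; last by lia.
  rewrite natr_sub1 //. lra.
- rewrite ifF; last by lia.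
  rewrite -addnS natrD -natr1; lra.
Qed.

Lemma sum_odd n (q : R) :
  \sum_(0 <= k < n + n + 1) powR q (2 * rho false (n + n + 1) k.+1)
  = \sum_(0 <= i < n) (powR q (2 * i%:R + 1) + powR q (- (2 * i%:R + 1))) + 1.
Proof.
have h2 : ((n + n + 1) %/ 2 = n)%N by lia.
have ho : odd (n + n + 1) = true by rewrite oddD addnn odd_double.
rewrite split_odd big_split.
rewrite [powR q (2 * rho _ _ n.+1)](_ : _ = 1); last first.
  by rewrite /rho h2 ho ifF ?eqxx ?mulr0 ?powRr0 // ltnn.
rewrite addrAC.
congr (_ + _ + _); apply: eq_big_nat => i /andP[_ hi]; congr (powR q _);
  rewrite /rho h2 ho.
- rewrite ifT; last by lia.
  rewrite natr_sub1 //. lra.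
- rewrite ifF; last by lia. rewrite ifF; last by apply/eqP; lia.
  have -> : ((n + 1 + i).+1)%:R = (n + i)%:R + 2 :> R.
    by rewrite -natrD; congr (_%:R); lia.
  rewrite natrD; lra.
Qed.

Lemma qinv_ne {q : R} : 0 < q -> q != 1 -> q - q^-1 != 0.
Proof.
move=> hq h1; rewrite subr_eq0; apply/negP => /eqP e.
have e2 : q * q = 1 by rewrite {2}e mulfV // gt_eqF.
have : q = 1 by nra.
by move=> e3; move: h1; rewrite e3 eqxx.
Qed.

Lemma powRD1 (q y : R) : 0 < q -> powR q (y + 1) = powR q y * q.
Proof. by move=> hq; rewrite powRD ?powRr1 ?ltW //; apply/implyP => _; rewrite gt_eqF. Qed.
Lemma powRB1 (q y : R) : 0 < q -> powR q (y - 1) = powR q y / q.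
Proof. by move=> hq; rewrite powRB ?powRr1 ?ltW //; apply/implyP => _; rewrite gt_eqF. Qed.

Lemma qnum_step (q x : R) : 0 < q ->
  qnum q (x + 1) = qnum q (x - 1) + powR q x + powR q (- x).
Proof.
move=> hq; rewrite /qnum; case: ifP => h1.
  by rewrite (eqP h1) !powR1; lra.
have hn : q != 0 by rewrite gt_eqF.
have hd := qinv_ne hq (negbT h1).
have e1 : -(x+1) = -x - 1 by ring.
have e2 : -(x-1) = -x + 1 by ring.
rewrite e1 e2 !powRD1 // !powRB1 // !powRN.
have hp : q `^ x != 0 by rewrite gt_eqF // powR_gt0.
have hd2 : q * q - 1 != 0.
  apply: contra hd => /eqP h; apply/eqP.
  have -> : q - q^-1 = (q * q - 1) / q by field.
  by rewrite h mul0r.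
field. by rewrite hp hn hd2.
Qed.

Lemma qnum_ind (q c : R) n : 0 < q ->
  qnum q (2 * n%:R + c - 1) = qnum q (c - 1) +
    \sum_(0 <= i < n) (powR q (2 * i%:R + c) + powR q (- (2 * i%:R + c))).
Proof.
move=> hq; elim: n => [|n IH].
  by rewrite big_nil mulr0 add0r addr0.
rewrite big_nat_recr //= addrA -IH.
have -> : 2 * n.+1%:R + c - 1 = (2 * n%:R + c) + 1 by rewrite -natr1; ring.
rewrite qnum_step // addrA; congr (qnum q _ + _ + _); ring.
Qed.

Lemma qnum0 (q : R) : qnum q 0 = 0.
Proof. by rewrite /qnum oppr0 subrr mul0r; case: ifP. Qed.

Lemma qnum1 (q : R) : 0 < q -> qnum q 1 = 1.
Proof.
move=> hq; rewrite /qnum; case: ifP => // h.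
by rewrite powRr1 ?ltW // powR_inv1 ?ltW // divff // qinv_ne // h.
Qed.

Lemma qnumN1 (q : R) : 0 < q -> qnum q (-1) = -1.
Proof.
move=> hq; rewrite /qnum; case: ifP => // h.
rewrite opprK powRr1 ?ltW // powR_inv1 ?ltW // -opprB mulNr divff //.
by rewrite qinv_ne // h.
Qed.

Definition alc (symp : bool) (N : nat) (q : R) (i : 'I_N) : R :=
  powR q (rho symp N i.+1) * epsi symp N i.+1.
Definition bec (symp : bool) (N : nat) (q : R) (i : 'I_N) : R :=
  powR q (- rho symp N i.+1) * epsi symp N i.+1.

Lemma s_term (symp : bool) n (b : bool) (q : R) k : (symp -> b = false) -> 0 < q ->
  (k < n + n + b)%N ->
  powR q (rho symp (n + n + b) k.+1) * epsi symp (n + n + b) k.+1 *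
   (powR q (- rho symp (n + n + b) (n + n + b - k.+1).+1) * epsi symp (n + n + b) (n + n + b - k.+1).+1)
  = epsR symp * powR q (2 * rho symp (n + n + b) k.+1).
Proof.
move=> hs hq hk.
have hkm : (k + (n + n + b - k.+1).+1 = n + n + b)%N by lia.
have e := @rho_rev symp n b k _ hs hkm (ltn0Sn _).
have e' : rho symp (n + n + b) (n + n + b - k.+1).+1 = - rho symp (n + n + b) k.+1 :> R.
  by rewrite e opprK.
rewrite e' opprK mulrACA (@epsi_rev symp n b k _ hs hkm (ltn0Sn _)).
rewrite -powRD; last by apply/implyP => _; rewrite gt_eqF.
rewrite mulrC; congr (_ * powR q _); ring.
Qed.

Lemma s_val_nat (symp : bool) n (b : bool) (q : R) : (symp -> b = false) -> 0 < q ->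
  \sum_(0 <= k < n + n + b)
    (powR q (rho symp (n + n + b) k.+1) * epsi symp (n + n + b) k.+1 *
     (powR q (- rho symp (n + n + b) (n + n + b - k.+1).+1) * epsi symp (n + n + b) (n + n + b - k.+1).+1))
  = 1 + epsR symp * qnum q ((n + n + b)%:R - epsR symp).
Proof.
move=> hs hq.
rewrite (eq_big_nat _ _ (F2 := fun k => epsR symp * powR q (2 * rho symp (n + n + b) k.+1))); last first.
  by move=> k /andP[_ hk]; rewrite s_term.
rewrite -mulr_sumr.
case: symp hs => [/(_ isT) hb|_].
- subst b; rewrite /= addn0 sum_symp /epsR.
  have -> : (n + n)%:R - -1 = 2 * n%:R + 2 - 1 :> R by rewrite natrD; ring.
  rewrite qnum_ind // (_ : 2 - 1 = 1 :> R); last by ring.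
  rewrite qnum1 //; ring.
- rewrite /epsR mul1r; case: b.
  + rewrite sum_odd.
    have -> : (n + n + true)%:R - 1 = 2 * n%:R + 1 - 1 :> R by rewrite /= !natrD; ring.
    rewrite qnum_ind // subrr qnum0; ring.
  + rewrite /= addn0 sum_even.
    have -> : (n + n)%:R - 1 = 2 * n%:R + 0 - 1 :> R by rewrite natrD; ring.
    rewrite qnum_ind // sub0r qnumN1 //; ring.
Qed.

Lemma s_val (symp : bool) (N : nat) (q : R) : (2 <= N)%N -> (symp -> ~~ odd N) -> 0 < q ->
  \sum_(i < N) alc symp N q i * bec symp N q (rev_ord i)
  = 1 + epsR symp * qnum q (N%:R - epsR symp).
Proof.
move=> hN2 hs hq.
transitivity (\sum_(0 <= k < N)
    (powR q (rho symp N k.+1) * epsi symp N k.+1 *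
     (powR q (- rho symp N (N - k.+1).+1) * epsi symp N (N - k.+1).+1))).
  by rewrite big_mkord.
have hN : N = (N./2 + N./2 + odd N)%N by rewrite addnn addnC odd_double_half.
have hs' : symp -> odd N = false by move=> /hs /negbTE.
rewrite hN; exact: s_val_nat.
Qed.
End Rho.

Section Final.
Variable R : realType.

Lemma epsi_sq symp N k : epsi symp N k * epsi symp N k = 1 :> R.
Proof. rewrite /epsi; case: symp; last by rewrite mulr1. by case: ifP => _; rewrite ?mulr1 ?mulrNN ?mulr1. Qed.

Lemma hab_c symp N q : 0 < q -> forall i, @alc R symp N q i * @bec R symp N q i = 1.
Proof.
move=> hq i; rewrite /alc /bec powRN.
have h : q `^ rho symp N i.+1 != 0 by rewrite gt_eqF // powR_gt0.
have := epsi_sq symp N i.+1.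
set a := q `^ _; set b := epsi _ _ _ => hb.
rewrite mulrACA hb mulr1 mulfV //.
Qed.

Lemma P0E symp N q : 0 < q ->
  P0 symp N q = dconst symp N q *: E (@alc R symp N q) (@bec R symp N q).
Proof.
move=> hq; rewrite /P0 /E; congr (_ *: _); apply: eq_bigr => i _; apply: eq_bigr => j _.
congr (_ *: _); rewrite /alc /bec powRD; last by apply/implyP => _; rewrite gt_eqF.
ring.
Qed.

End Final.

Theorem mainTheorem7 (R : realType) (symp : bool) (N : nat) (q eta : R) :
  (2 <= N)%N ->
  (symp -> ~~ odd N) ->
  0 < q ->
  1 + epsR symp * qnum q (N%:R - epsR symp) != 0 ->
  0 < 1 - 4 * (dconst symp N q) ^+ 2 < 1 ->
  0 < eta ->
  tanh eta = Num.sqrt (1 - 4 * (dconst symp N q) ^+ 2) ->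
  [/\ forall theta theta' : R,
        eta + theta != 0 -> eta + theta' != 0 -> eta + theta + theta' != 0 ->
        op12 (Rhat symp N q eta theta) *m op23 (Rhat symp N q eta (theta + theta'))
          *m op12 (Rhat symp N q eta theta')
        = op23 (Rhat symp N q eta theta') *m op12 (Rhat symp N q eta (theta + theta'))
          *m op23 (Rhat symp N q eta theta),
      forall theta : R, eta + theta != 0 -> eta - theta != 0 ->
        Rhat symp N q eta theta *m Rhat symp N q eta (- theta) = 1%:M
    & forall theta theta' : R,
        eta + theta != 0 -> eta + theta' != 0 -> eta + theta + theta' != 0 ->
        wfun eta (theta + theta')
        = (wfun eta theta + wfun eta theta' + wfun eta theta * wfun eta theta')
          / (1 - (dconst symp N q) ^+ 2 * wfun eta theta * wfun eta theta')].
Proof.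
move=> hN hs hq hnz /andP[h0 h1] he ht.
have hN0 : (0 < N)%N by apply: leq_trans hN.
set k0 := Ordinal hN0.
set d := dconst symp N q.
set al := @alc R symp N q; set be := @bec R symp N q.
have hab := @hab_c R symp N q hq.
have hP : P0 symp N q = d *: E al be := @P0E R symp N q hq.
have hds : d * (\sum_(i < N) al i * be (rev_ord i)) = 1.
  by rewrite s_val // /d /dconst mulVf.
have PP : P0 symp N q *m P0 symp N q = P0 symp N q.
  rewrite hP -scalemxAl -scalemxAr (EE k0) scalerA scalerA.
  by rewrite -mulrA hds mulr1.
have R12 : forall t, op12 (Rhat symp N q eta t) = 1%:M + wfun eta t *: op12 (P0 symp N q).
  by move=> t; rewrite /Rhat op12D op12_1 op12Z.
have R23 : forall t, op23 (Rhat symp N q eta t) = 1%:M + wfun eta t *: op23 (P0 symp N q).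
  by move=> t; rewrite /Rhat op23D op23_1 op23Z.
split.
- move=> t t' n1 n2 n3; rewrite !R12 !R23.
  have [hden heq] := @w_main R eta d t t' he h0 ht n1 n2 n3.
  apply: ybe_abs (d ^+ 2) _ _ _ _ _.
  + by rewrite -op12M PP.
  + by rewrite -op23M PP.
  + rewrite hP !op12Z op23Z -!(scalemxAl, scalemxAr) !scalerA (TL12 k0 hab).
    by rewrite expr2.
  + rewrite hP !op23Z op12Z -!(scalemxAl, scalemxAr) !scalerA (TL23 k0 hab).
    by rewrite expr2.
  + rewrite -heq; ring.
- move=> t n1 n2; apply: unit_abs => //; exact: (@w_unit R eta t).
- move=> t t' n1 n2 n3; have [hden heq] := @w_main R eta d t t' he h0 ht n1 n2 n3.
  by rewrite -heq mulfK.
Qed.
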